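(* Consider chained iterated learning in the Gaussian setting with prior $N(\bar\mu,\bar\sigma^2)$, likelihood $N(h,\sigma^2)$, initial teacher distribution $N(\mu_0,\sigma_0^2)$, and sample sizes $m_t$. For any $0<\varepsilon<1$ and any constant $c>0$, the sample size sequence $$m_t=\frac{|\mu_0-\bar\mu|}{\varepsilon}\Bigl(1+\frac1c\Bigr)\Bigl(\frac{\sigma}{\bar\sigma}\Bigr)^2t^{1+c}$$ makes chained iterated learning strongly $\varepsilon$-self-sustaining, i.e., $|\mathbb E\,\mu_t-\mu_0|\le\varepsilon$ for all $t$ and $\sigma_t^2+\operatorname{Var}\mu_t\to0$ as $t\to\infty$.
   Context: Gaussian iterated learning: hypotheses $h\in\mathbb R$; every learner has prior $N(\bar\mu,\bar\sigma^2)$; data generated from hypothesis $h$ is $d=h+\phi$ with $\phi\sim N(0,\sigma^2)$. Learner $0$ is the original teacher, with ''posterior'' $N(\mu_0,\sigma_0^2)$. Write $\tau=1/\sigma^2$, $\bar\tau=1/\bar\sigma^2$. Learner $t\ge1$ receives data $d_{t,1},\dots,d_{t,m_t}$ from learner $t-1$ and Bayes-updates, obtaining the Gaussian posterior $N(\mu_t,\sigma_t^2)$ with $\mu_t=\frac{\bar\tau\bar\mu+\tau(d_{t,1}+\dots+d_{t,m_t})}{\bar\tau+m_t\tau}$ and $1/\sigma_t^2=\bar\tau+m_t\tau$. Each datum is drawn from learner $t-1$'s posterior with noise: the $d_{t,i}$ are mutually independent, each distributed as $N(\mathbb E\mu_{t-1},\operatorname{Var}\mu_{t-1}+\sigma_{t-1}^2+\sigma^2)$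 (with $\mu_0$ deterministic, $\operatorname{Var}\mu_0=0$), so that $\mathbb E\mu_t=\frac{\bar\tau\bar\mu+m_t\tau\,\mathbb E\mu_{t-1}}{\bar\tau+m_t\tau}$ and $\operatorname{Var}\mu_t=\frac{m_t\tau^2}{(\bar\tau+m_t\tau)^2}(\operatorname{Var}\mu_{t-1}+\sigma_{t-1}^2+\sigma^2)$. Iterated learning is $\varepsilon$-self-sustaining if $|\mathbb E\mu_t-\mu_0|\le\varepsilon$ and $\sigma_t^2+\operatorname{Var}\mu_t$ stays bounded for all $t$; strongly $\varepsilon$-self-sustaining if moreover $\sigma_t^2+\operatorname{Var}\mu_t\to0$. *)

(* Defs.v *)
From Stdlib Require Import Reals.
Open Scope R_scope.

(* One step of chained Gaussian iterated learning.  State = (E mu_t, Var mu_t, sigma_t^2).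
   tau = 1/sigma^2, taub = 1/sigmab^2; mt = sample size of learner t (real-valued, as in the paper's formula). *)
Definition il_step (tau taub mub mt : R) (st : R * R * R) : R * R * R :=
  let '(E, V, Sg) := st in
  ((taub * mub + mt * tau * E) / (taub + mt * tau),
   mt * tau ^ 2 / (taub + mt * tau) ^ 2 * (V + Sg + / tau),
   / (taub + mt * tau)).

(* State of learner t; learner 0 is the teacher N(mu0, sig0^2) with mu0 deterministic. *)
Fixpoint il_state (mub sigb sig mu0 sig0 : R) (m : nat -> R) (t : nat) : R * R * R :=
  match t with
  | O => (mu0, 0, sig0 ^ 2)
  | S t' => il_step (/ sig ^ 2) (/ sigb ^ 2) mub (m (S t'))
                    (il_state mub sigb sig mu0 sig0 m t')
  end.

Definition il_mean mub sigb sig mu0 sig0 m t : R :=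
  fst (fst (il_state mub sigb sig mu0 sig0 m t)).
Definition il_var mub sigb sig mu0 sig0 m t : R :=
  snd (fst (il_state mub sigb sig mu0 sig0 m t)).
Definition il_sig2 mub sigb sig mu0 sig0 m t : R :=
  snd (il_state mub sigb sig mu0 sig0 m t).

Definition strongly_self_sustaining (mub sigb sig mu0 sig0 : R) (m : nat -> R) (eps : R) : Prop :=
  (forall t, Rabs (il_mean mub sigb sig mu0 sig0 m t - mu0) <= eps) /\
  (exists B, forall t, il_sig2 mub sigb sig mu0 sig0 m t + il_var mub sigb sig mu0 sig0 m t <= B) /\
  Un_cv (fun t => il_sig2 mub sigb sig mu0 sig0 m t + il_var mub sigb sig mu0 sig0 m t) 0.

(* The sample size schedule m_t = |mu0 - mub|/eps (1 + 1/c) (sig/sigb)^2 t^(1+c)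
   (only used for t >= 1). *)
Definition m_sched (mub sigb sig mu0 eps c : R) (t : nat) : R :=
  Rabs (mu0 - mub) / eps * (1 + / c) * (sig / sigb) ^ 2 * Rpower (INR t) (1 + c).

(* Main.v *)
Require Import Defs.
From Stdlib Require Import Reals Lra Lia.
Open Scope R_scope.
Lemma ln_gap (n : R) : 0 < n -> / (n+1) <= ln (n+1) - ln n.
Proof.
  intros Hn.
  set (y := Rinv (n+1)).
  assert (Hy : 0 < y) by (unfold y; apply Rinv_0_lt_compat; lra).
  assert (Hyn : y * (n+1) = 1) by (unfold y; field; lra).
  assert (H1 := exp_ineq1_le (- y)).
  assert (H2 : exp y * exp (-y) = 1) by (rewrite <- exp_plus; replace (y + - y) with 0 by ring; apply exp_0).
  assert (H3 : exp y * n <= n + 1).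
  { assert (exp y * (1 - y) <= 1) by (pose proof (exp_pos y); nra).
    nra. }
  assert (H4 : exp y <= (n+1) / n).
  { apply (Rmult_le_reg_r n); [lra|]. unfold Rdiv. rewrite Rmult_assoc, Rinv_l; lra. }
  rewrite <- (ln_exp y).
  replace (ln (n+1) - ln n) with (ln ((n+1)/n)).
  - destruct (Rle_lt_or_eq_dec _ _ H4) as [h|h]; [left; apply ln_increasing; [apply exp_pos|exact h] | right; rewrite h; reflexivity].
  - unfold Rdiv. rewrite ln_mult by (try apply Rinv_0_lt_compat; lra).
    rewrite ln_Rinv by lra. ring.
Qed.

Lemma key (n c : R) : 1 <= n -> 0 < c ->
  / ((n+1) * Rpower (n+1) c) <= / c * (/ Rpower n c - / Rpower (n+1) c).
Proof.
  intros Hn Hc.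
  set (p := Rpower n c). set (q := Rpower (n+1) c).
  assert (Hp : 0 < p) by (unfold p, Rpower; apply exp_pos).
  assert (Hq : 0 < q) by (unfold q, Rpower; apply exp_pos).
  assert (Hqp : q >= p * (1 + c / (n+1))).
  { unfold q, p, Rpower.
    replace (c * ln (n+1)) with (c * ln n + c * (ln (n+1) - ln n)) by ring.
    rewrite exp_plus.
    pose proof (ln_gap n ltac:(lra)) as G.
    pose proof (exp_ineq1_le (c * (ln (n + 1) - ln n))) as E.
    pose proof (exp_pos (c * ln n)).
    assert (c / (n+1) <= c * (ln (n + 1) - ln n)).
    { unfold Rdiv. apply Rmult_le_compat_l; lra. }
    nra. }
  assert (Hq2 : (n+1) * q >= (n+1+c) * p).
  { replace ((n+1+c)*p) with ((n+1) * (p * (1 + c/(n+1)))) by (field; lra). nra. }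
  apply (Rmult_le_reg_r (c * (n+1) * p * q)).
  { repeat apply Rmult_lt_0_compat; lra. }
  replace (/ ((n + 1) * q) * (c * (n + 1) * p * q)) with (c * p) by (field; lra).
  replace (/ c * (/ p - / q) * (c * (n + 1) * p * q)) with ((n+1) * (q - p)) by (field; lra).
  lra.
Qed.

Lemma Rpower1 c : Rpower 1 c = 1.
Proof. unfold Rpower. rewrite ln_1, Rmult_0_r. apply exp_0. Qed.

Lemma Rpower_ge1 n c : 1 <= n -> 0 <= c -> 1 <= Rpower n c.
Proof. intros. rewrite <- (Rpower1 c). apply Rle_Rpower_l; lra. Qed.

Lemma Rpower_pos n c : 0 < Rpower n c.
Proof. unfold Rpower; apply exp_pos. Qed.

Lemma mean_step tau taub mub m E V G : 0 < tau -> 0 < taub -> 0 < m ->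
  fst (fst (il_step tau taub mub m (E, V, G))) = mub + (m*tau/(taub+m*tau)) * (E - mub).
Proof. intros. simpl. field. nra. Qed.

Lemma a_bounds tau taub m : 0 < tau -> 0 < taub -> 0 < m ->
  0 <= m*tau/(taub+m*tau) <= 1 /\ 1 - m*tau/(taub+m*tau) <= taub / (m * tau).
Proof.
  intros. assert (0 < m*tau) by nra.
  split; [split|].
  - apply Rlt_le, Rdiv_lt_0_compat; lra.
  - apply (Rmult_le_reg_r (taub + m*tau)); [lra|].
    unfold Rdiv; rewrite Rmult_assoc, Rinv_l; lra.
  - replace (1 - m*tau/(taub+m*tau)) with (taub / (taub + m*tau)) by (field; lra).
    unfold Rdiv. apply Rmult_le_compat_l; [lra|].
    apply Rinv_le_contravar; lra.
Qed.

Lemma var_step tau taub mub m E V G : 0 < tau -> 0 < taub -> 0 < m -> 0 <= V -> 0 <= G ->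
  let st := il_step tau taub mub m (E, V, G) in
  0 <= snd (fst st) /\ 0 <= snd st /\ snd st + snd (fst st) <= / m * (V + G + 2 / tau).
Proof.
  intros. subst st. unfold il_step; cbn [fst snd]. assert (0 < m*tau) by nra.
  assert (0 < /tau) by (apply Rinv_0_lt_compat; lra).
  assert (B1 : m * tau ^ 2 / (taub + m * tau) ^ 2 <= / m).
  { apply (Rmult_le_reg_r (m * (taub + m*tau)^2)). { apply Rmult_lt_0_compat; [lra|]. apply pow_lt; lra. }
    replace (m * tau ^ 2 / (taub + m * tau) ^ 2 * (m * (taub + m * tau) ^ 2)) with ((m*tau)^2) by (field; lra).
    replace (/ m * (m * (taub + m * tau) ^ 2)) with ((taub + m*tau)^2) by (field; lra).
    assert (0 <= taub*(taub+2*(m*tau))) by (apply Rmult_le_pos; lra).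
    replace ((taub + m*tau)^2) with ((m*tau)^2 + taub*(taub+2*(m*tau))) by ring. lra. }
  assert (B0 : 0 <= m * tau ^ 2 / (taub + m * tau) ^ 2).
  { apply Rlt_le, Rdiv_lt_0_compat; [apply Rmult_lt_0_compat; [lra|apply pow_lt; lra]|]. apply pow_lt; lra. }
  assert (B2 : / (taub + m*tau) <= / m * (1 / tau)).
  { replace (/ m * (1/tau)) with (/ (m*tau)) by (field; lra). apply Rinv_le_contravar; lra. }
  split; [|split].
  - apply Rmult_le_pos; lra.
  - apply Rlt_le, Rinv_0_lt_compat; lra.
  - assert (m * tau ^ 2 / (taub + m * tau) ^ 2 * (V + G + / tau) <= / m * (V + G + / tau))
      by (apply Rmult_le_compat_r; lra).
    assert (/m*(V+G+2/tau) = /m*(1/tau) + /m*(V+G+/tau)) by (field; lra).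
    lra.
Qed.

Lemma state_S mub sigb sig mu0 sig0 m t : il_state mub sigb sig mu0 sig0 m (S t) =
  il_step (/ sig ^ 2) (/ sigb ^ 2) mub (m (S t)) (il_state mub sigb sig mu0 sig0 m t).
Proof. reflexivity. Qed.

Lemma INR_S_ge1 t : 1 <= INR (S t).
Proof. rewrite S_INR. pose proof (pos_INR t). lra. Qed.

Lemma mean_inv (mub sigb sig mu0 sig0 c k : R) (m : nat -> R) : 0<sigb -> 0<sig -> 0<c -> 0<k ->
  (forall t, 0 < m (S t)) ->
  (forall t, /sigb^2 / (m (S t) * /sig^2) <= k / Rpower (INR (S t)) (1+c)) ->
  forall t, exists x, il_mean mub sigb sig mu0 sig0 m (S t) = mub + (mu0 - mub)*x /\ 0<=x<=1 /\
     1 - x <= k*(1 + /c - /(c * Rpower (INR (S t)) c)).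
Proof.
  intros Hsb Hs Hc Hk Hm Hr.
  assert (Ht : 0 < / sig ^ 2) by (apply Rinv_0_lt_compat, pow_lt; lra).
  assert (Htb : 0 < / sigb ^ 2) by (apply Rinv_0_lt_compat, pow_lt; lra).
  induction t as [|t IH].
  - unfold il_mean. rewrite state_S. simpl il_state.
    rewrite mean_step by auto.
    destruct (a_bounds _ _ (m 1%nat) Ht Htb (Hm O)) as [Ha1 Ha2].
    eexists. split; [rewrite Rmult_comm; reflexivity|]. split; [exact Ha1|].
    specialize (Hr O). replace (INR 1) with 1 in * by reflexivity. rewrite !Rpower1 in *.
    replace (k * (1 + / c - / (c * 1))) with k by (field; lra).
    replace (k/1) with k in Hr by field. lra.
  - destruct IH as [x [Hx [Hx01 Hxb]]]. unfold il_mean in *. rewrite state_S.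
    destruct (il_state mub sigb sig mu0 sig0 m (S t)) as [[E V] G]. simpl in Hx.
    rewrite mean_step by auto.
    destruct (a_bounds _ _ (m (S (S t))) Ht Htb (Hm (S t))) as [Ha1 Ha2].
    set (a := m (S (S t)) * / sig ^ 2 / (/ sigb ^ 2 + m (S (S t)) * / sig ^ 2)) in *.
    exists (a * x). split; [rewrite Hx; ring|]. split; [nra|].
    specialize (Hr (S t)).
    assert (E1 : 1 - a * x <= (1 - x) + (1 - a)) by nra.
    pose proof (INR_S_ge1 t) as Hn.
    set (n := INR (S t)) in *.
    assert (En : INR (S (S t)) = n + 1) by (unfold n; rewrite (S_INR (S t)); reflexivity).
    rewrite En in *.
    rewrite Rpower_plus, Rpower_1 in Hr by lra.
    pose proof (key n c Hn Hc) as K.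
    pose proof (Rpower_pos n c). pose proof (Rpower_pos (n+1) c).
    assert (E2 : k * (1 + / c - / (c * Rpower (n + 1) c)) =
                 k * (1 + / c - / (c * Rpower n c)) + k * (/ c * (/ Rpower n c - / Rpower (n + 1) c)))
      by (field; repeat split; lra).
    assert (E3 : k / ((n + 1) * Rpower (n + 1) c) <= k * (/ c * (/ Rpower n c - / Rpower (n + 1) c)))
      by (unfold Rdiv; apply Rmult_le_compat_l; lra).
    lra.
Qed.

Lemma var_nonneg mub sigb sig mu0 sig0 m : 0<sigb -> 0<sig -> (forall t, 0 < m (S t)) ->
  forall t, 0 <= il_var mub sigb sig mu0 sig0 m t /\ 0 <= il_sig2 mub sigb sig mu0 sig0 m t.
Proof.
  intros Hsb Hs Hm.
  assert (Ht : 0 < / sig ^ 2) by (apply Rinv_0_lt_compat, pow_lt; lra).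
  assert (Htb : 0 < / sigb ^ 2) by (apply Rinv_0_lt_compat, pow_lt; lra).
  induction t as [|t IH].
  - unfold il_var, il_sig2; simpl. split; [lra| apply pow2_ge_0].
  - unfold il_var, il_sig2 in *. rewrite state_S.
    destruct (il_state mub sigb sig mu0 sig0 m t) as [[E V] G]. simpl in IH.
    destruct (var_step _ _ mub _ E V G Ht Htb (Hm t)) as [h1 [h2 h3]]; tauto.
Qed.

Lemma var_rec mub sigb sig mu0 sig0 m : 0<sigb -> 0<sig -> (forall t, 0 < m (S t)) ->
  forall t, il_sig2 mub sigb sig mu0 sig0 m (S t) + il_var mub sigb sig mu0 sig0 m (S t) <=
    / m (S t) * (il_sig2 mub sigb sig mu0 sig0 m t + il_var mub sigb sig mu0 sig0 m t + 2 / (/ sig ^ 2)).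
Proof.
  intros Hsb Hs Hm t.
  assert (Ht : 0 < / sig ^ 2) by (apply Rinv_0_lt_compat, pow_lt; lra).
  assert (Htb : 0 < / sigb ^ 2) by (apply Rinv_0_lt_compat, pow_lt; lra).
  pose proof (var_nonneg mub sigb sig mu0 sig0 m Hsb Hs Hm t) as NN.
  unfold il_var, il_sig2 in *. rewrite state_S.
  destruct (il_state mub sigb sig mu0 sig0 m t) as [[E V] G]. simpl in NN.
  destruct (var_step _ _ mub _ E V G Ht Htb (Hm t)) as [h1 [h2 h3]]; try tauto.
  cbn [fst snd]. replace (G + V) with (V + G) by ring. exact h3.
Qed.

Lemma seq_cv (s : nat -> R) (A C : R) : 0 < A -> 0 <= C -> (forall t, 0 <= s t) ->
  (forall t, s (S t) <= A / INR (S t) * (s t + C)) -> Un_cv s 0.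
Proof.
  intros HA HC Hs Hr.
  destruct (INR_unbounded (2*A)) as [N0 HN0].
  set (M := Rmax (s N0) C).
  assert (HM1 : s N0 <= M) by apply Rmax_l.
  assert (HM2 : C <= M) by apply Rmax_r.
  assert (Hhalf : forall p, (N0 <= p)%nat -> A / INR (S p) <= / 2).
  { intros p Hp. assert (INR N0 <= INR p) by (apply le_INR; exact Hp).
    rewrite S_INR. apply (Rmult_le_reg_r (INR p + 1)); [lra|].
    unfold Rdiv. rewrite Rmult_assoc, Rinv_l by lra. lra. }
  assert (Hb : forall k, s (N0 + k)%nat <= M).
  { induction k as [|k IH].
    - rewrite Nat.add_0_r. exact HM1.
    - rewrite Nat.add_succ_r. eapply Rle_trans; [apply Hr|].
      pose proof (Hhalf (N0+k)%nat ltac:(lia)).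
      assert (0 <= A / INR (S (N0 + k))) by (apply Rlt_le, Rdiv_lt_0_compat; [lra| apply lt_0_INR; lia]).
      pose proof (Hs (N0+k)%nat). nra. }
  intros e He.
  destruct (INR_unbounded (A * (M + C) / e)) as [N1 HN1].
  exists (S (N0 + N1)). intros n Hn. destruct n as [|p]; [lia|].
  unfold R_dist. rewrite Rminus_0_r, Rabs_right by (apply Rle_ge, Hs).
  assert (Hp : s p <= M) by (replace p with (N0 + (p - N0))%nat by lia; apply Hb).
  assert (Hx : INR N1 <= INR (S p)) by (apply le_INR; lia).
  set (x := INR (S p)) in *.
  assert (Hx0 : 0 < x) by (unfold x; apply lt_0_INR; lia).
  assert (Hax : A * (M + C) < e * x).
  { assert (A * (M + C) / e < x) by lra.
    apply (Rmult_lt_compat_l e) in H; [|lra].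
    replace (e * (A * (M + C) / e)) with (A * (M + C)) in H by (field; lra). exact H. }
  eapply Rle_lt_trans; [apply Hr|]. fold x.
  assert (A / x * (s p + C) <= A / x * (M + C)).
  { apply Rmult_le_compat_l; [apply Rlt_le, Rdiv_lt_0_compat; lra| lra]. }
  assert (A / x * (M + C) < e).
  { replace (A / x * (M + C)) with (A * (M + C) * / x) by (field; lra).
    apply Rlt_le_trans with (e * x * / x); [|right; field; lra].
    apply Rmult_lt_compat_r; [apply Rinv_0_lt_compat|]; lra. }
  lra.
Qed.

Theorem theorem3 (mub sigb sig mu0 sig0 eps c : R) :
  0 < sigb -> 0 < sig -> 0 < sig0 ->
  0 < eps -> eps < 1 -> 0 < c ->
  mu0 <> mub ->
  strongly_self_sustaining mub sigb sig mu0 sig0 (m_sched mub sigb sig mu0 eps c) eps.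
Proof.
  intros Hsb Hs Hs0 He He1 Hc Hne.
  set (m := m_sched mub sigb sig mu0 eps c).
  assert (HD : 0 < Rabs (mu0 - mub)) by (apply Rabs_pos_lt; lra).
  set (K := Rabs (mu0 - mub) / eps * (1 + / c) * (sig / sigb) ^ 2).
  assert (HK : 0 < K).
  { unfold K. apply Rmult_lt_0_compat; [apply Rmult_lt_0_compat|].
    - apply Rdiv_lt_0_compat; lra.
    - pose proof (Rinv_0_lt_compat c Hc). lra.
    - apply pow_lt, Rdiv_lt_0_compat; lra. }
  assert (Hmt : forall t, m t = K * Rpower (INR t) (1 + c)) by reflexivity.
  assert (Hm : forall t, 0 < m (S t)).
  { intros t. rewrite Hmt. apply Rmult_lt_0_compat; [lra| apply Rpower_pos]. }
  set (k := eps * c / (Rabs (mu0 - mub) * (1 + c))).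
  assert (Hk : 0 < k) by (unfold k; apply Rdiv_lt_0_compat; [nra| nra]).
  assert (Hr : forall t, /sigb^2 / (m (S t) * /sig^2) <= k / Rpower (INR (S t)) (1+c)).
  { intros t. right. rewrite Hmt. unfold K, k.
    pose proof (Rpower_pos (INR (S t)) (1+c)).
    field. repeat split; lra. }
  pose proof (mean_inv mub sigb sig mu0 sig0 c k m Hsb Hs Hc Hk Hm Hr) as MI.
  set (A := / K).
  assert (HA : 0 < A) by (apply Rinv_0_lt_compat; lra).
  assert (Hv : forall t, / m (S t) <= A / INR (S t)).
  { intros t. rewrite Hmt. pose proof (INR_S_ge1 t).
    rewrite Rpower_plus, Rpower_1 by lra.
    pose proof (Rpower_ge1 (INR (S t)) c H ltac:(lra)).
    unfold A. rewrite Rinv_mult. unfold Rdiv. apply Rmult_le_compat_l; [apply Rlt_le, Rinv_0_lt_compat; lra|].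
    apply Rinv_le_contravar; [lra|]. nra. }
  set (s := fun t => il_sig2 mub sigb sig mu0 sig0 m t + il_var mub sigb sig mu0 sig0 m t).
  assert (Hsn : forall t, 0 <= s t).
  { intros t. destruct (var_nonneg mub sigb sig mu0 sig0 m Hsb Hs Hm t). unfold s. lra. }
  assert (Ht : 0 < / sig ^ 2) by (apply Rinv_0_lt_compat, pow_lt; lra).
  assert (HC : 0 <= 2 / (/ sig ^ 2)) by (apply Rlt_le, Rdiv_lt_0_compat; lra).
  assert (Hsr : forall t, s (S t) <= A / INR (S t) * (s t + 2 / (/ sig ^ 2))).
  { intros t. eapply Rle_trans; [apply (var_rec mub sigb sig mu0 sig0 m Hsb Hs Hm t)|].
    fold (s t). apply Rmult_le_compat_r; [pose proof (Hsn t); lra| apply Hv]. }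
  assert (Hcv : Un_cv s 0) by exact (seq_cv s A _ HA HC Hsn Hsr).
  split; [|split].
  - intros [|t].
    + unfold il_mean. simpl. rewrite Rminus_diag, Rabs_R0. lra.
    + destruct (MI t) as [x [Hx [Hx01 Hxb]]]. rewrite Hx.
      replace (mub + (mu0 - mub) * x - mu0) with ((mu0 - mub) * (x - 1)) by ring.
      rewrite Rabs_mult, (Rabs_left1 (x - 1)) by lra.
      pose proof (Rpower_pos (INR (S t)) c).
      assert (0 < / (c * Rpower (INR (S t)) c)) by (apply Rinv_0_lt_compat; nra).
      assert (1 - x <= k * (1 + / c)) by (pose proof (Rmult_lt_0_compat k _ Hk H0); nra).
      assert (Rabs (mu0 - mub) * (k * (1 + / c)) = eps) by (unfold k; field; lra).
      assert (Rabs (mu0 - mub) * (- (x - 1)) <= Rabs (mu0 - mub) * (k * (1 + / c)))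
        by (apply Rmult_le_compat_l; lra).
      lra.
  - destruct (cauchy_bound s (CV_Cauchy s (exist _ 0 Hcv))) as [B HB].
    exists B. intros t. apply HB. exists t. reflexivity.
  - exact Hcv.
Qed.
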